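(* In the hyperbolic plane let $l=(MN)$ be a line (the axis) with terminals $M,N$ at infinity. Let $(AB)$ and $(CD)$ be two lines lying in different half-planes bounded by $l$, with terminals $A,B,C,D$ at infinity, such that $M,N,A,B$ are four consecutive points on the circle at infinity and $M,N,D,C$ are four consecutive points on it. Put $\theta_1=\theta(A,B)$, $\theta_2=\theta(D,C)$, $\theta_{12}=\theta(B,C)$. Let $\delta_1,\delta_2$ be vectors with $\delta_1^2=\delta_2^2=-2$ orthogonal to $(AB)$ and $(CD)$ respectively such that $l$ is contained in both $\mathcal H^+_{\delta_1}$ and $\mathcal H^+_{\delta_2}$. Then $$(\delta_1,\delta_2)=2\,\mathrm{ch}\,\rho=4\frac{\mathrm{ch}\frac{\theta_1+\theta_{12}}{2}\,\mathrm{ch}\frac{\theta_2-\theta_{12}}{2}}{\mathrm{sh}\frac{\theta_1}{2}\,\mathrm{sh}\frac{\theta_2}{2}}-2,$$ where $\rho$ is the distance between the lines $(AB)$ and $(CD)$.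
   Context: Let $V$ be a $3$-dimensional real vector space with a symmetric bilinear form of signature $(1,2)$; the hyperbolic plane is $\mathcal L=V^+/\mathbb R_{>0}$ ($V^+$ a component of $\{x^2>0\}$), curvature $-1$. Points at infinity are isotropic rays in the closure of $V^+$; they form a circle identified with the real projective line, with cross-ratio $[P,Q,R,S]=\frac{(t_R-t_P)(t_S-t_Q)}{(t_R-t_Q)(t_S-t_P)}$ in a projective coordinate $t$. For $\delta$ with $\delta^2<0$, $\mathcal H^+_\delta=\{\mathbb R_{>0}x:(x,\delta)\ge0\}$. For points $A,B$ at infinity in the same half-plane bounded by the axis $l=(MN)$, $\theta(A,B)=\ln[M,N,A,B]$. For a point $X$ at infinity not on $l$ let $X'$ be the other terminal of the line through $X$ orthogonal to $l$; for $A,B$ in different half-planes bounded by $l$, $\theta(A,B)=\theta(A,B')$. *)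

(* Defs.v *)
From Stdlib Require Import Reals.
Open Scope R_scope.

(** Model: V = R^3 with the form x0 y0 - x1 y1 - x2 y2 (signature (1,2)),
    V^+ = the component {x^2 > 0, x0 > 0}. *)
Record vec := mkV { v0 : R; v1 : R; v2 : R }.

Definition bil (x y : vec) : R := v0 x * v0 y - v1 x * v1 y - v2 x * v2 y.
Definition sq (x : vec) : R := bil x x.

Definition vadd (x y : vec) : vec := mkV (v0 x + v0 y) (v1 x + v1 y) (v2 x + v2 y).
Definition vscale (k : R) (x : vec) : vec := mkV (k * v0 x) (k * v1 x) (k * v2 x).

(** x represents a point of the hyperbolic plane (a ray in V^+). *)
Definition in_Vplus (x : vec) : Prop := sq x > 0 /\ v0 x > 0.

(** x represents a point at infinity: a (nonzero) isotropic vector in the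
    closure of V^+. *)
Definition ideal (x : vec) : Prop := sq x = 0 /\ v0 x > 0.

Definition on_line (p q x : vec) : Prop :=
  in_Vplus x /\ exists al be : R, x = vadd (vscale al p) (vscale be q).

Definition in_Hplus (delta x : vec) : Prop := bil x delta >= 0.

Definition line_in_Hplus (delta p q : vec) : Prop :=
  forall x, on_line p q x -> in_Hplus delta x.

Definition orth_to_line (delta p q : vec) : Prop :=
  bil delta p = 0 /\ bil delta q = 0.

(** Projective (homogeneous) coordinate on the circle at infinity, coming from
    the parametrisation x = (u^2+v^2, 2uv, u^2-v^2) of the isotropic cone;
    the affine projective coordinate is t = u/v. *)
Definition hcoord (x : vec) : R * R :=
  if Req_EM_T (v0 x - v2 x) 0 then (v0 x + v2 x, v1 x) else (v1 x, v0 x - v2 x).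

Definition det2 (p q : R * R) : R := fst p * snd q - fst q * snd p.

(** Cross-ratio [P,Q,R,S] = (t_R-t_P)(t_S-t_Q)/((t_R-t_Q)(t_S-t_P)),
    written homogeneously (so that the point t = infinity is allowed). *)
Definition cross_ratio (P Q R' S : vec) : R :=
  let p := hcoord P in let q := hcoord Q in
  let r := hcoord R' in let s := hcoord S in
  (det2 r p * det2 s q) / (det2 r q * det2 s p).

Definition theta (M N A B : vec) : R := ln (cross_ratio M N A B).

Definition at_angle (x : vec) (phi : R) : Prop :=
  v1 x = v0 x * cos phi /\ v2 x = v0 x * sin phi.

Definition consecutive4 (P Q R' S : vec) : Prop :=
  exists p q r s : R,
    at_angle P p /\ at_angle Q q /\ at_angle R' r /\ at_angle S s /\
    ((p < q /\ q < r /\ r < s /\ s < p + 2 * PI) \/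
     (p > q /\ q > r /\ r > s /\ s > p - 2 * PI)).

Definition lines_orth (p q r s : vec) : Prop :=
  exists n1 n2 : vec, n1 <> mkV 0 0 0 /\ n2 <> mkV 0 0 0 /\
    orth_to_line n1 p q /\ orth_to_line n2 r s /\ bil n1 n2 = 0.

Definition other_terminal_orth (M N X X' : vec) : Prop :=
  ideal X' /\ (forall k : R, X' <> vscale k X) /\ lines_orth X X' M N.

Definition hdist_is (x y : vec) (d : R) : Prop :=
  0 <= d /\ cosh d = bil x y / sqrt (sq x * sq y).

Definition lines_dist_is (a b c d : vec) (rho : R) : Prop :=
  (exists x y, on_line a b x /\ on_line c d y /\ hdist_is x y rho) /\
  (forall x y r, on_line a b x -> on_line c d y -> hdist_is x y r -> rho <= r).

(* Main.v *)
Require Import Defs.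
From Stdlib Require Import Reals Lra Lia Psatz.
Open Scope R_scope.


Definition Q (h : R*R) : vec := mkV (fst h * fst h + snd h * snd h) (2 * fst h * snd h) (fst h * fst h - snd h * snd h).
Definition Bv (h k : R*R) : vec := mkV (fst h * fst k + snd h * snd k) (fst h * snd k + snd h * fst k) (fst h * fst k - snd h * snd k).

Lemma vec_eq x y : v0 x = v0 y -> v1 x = v1 y -> v2 x = v2 y -> x = y.
Proof. destruct x, y; simpl; intros; subst; reflexivity. Qed.

Lemma bil_sym x y : bil x y = bil y x. Proof. unfold bil; ring. Qed.
Lemma bil_QQ h k : bil (Q h) (Q k) = 2 * det2 h k ^ 2.
Proof. unfold bil, Q, det2; simpl; ring. Qed.
Lemma bil_QB l h k : bil (Q l) (Bv h k) = 2 * det2 h l * det2 k l.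
Proof. unfold bil, Q, Bv, det2; simpl; ring. Qed.
Lemma bil_BB h k l m : bil (Bv h k) (Bv l m) = det2 h l * det2 k m + det2 h m * det2 k l.
Proof. unfold bil, Bv, det2; simpl; ring. Qed.
Lemma sq_B h k : sq (Bv h k) = - det2 h k ^ 2.
Proof. unfold sq, bil, Bv, det2; simpl; ring. Qed.
Lemma bil_sc_l k x y : bil (vscale k x) y = k * bil x y.
Proof. unfold bil, vscale; simpl; ring. Qed.
Lemma bil_sc_r k x y : bil x (vscale k y) = k * bil x y.
Proof. unfold bil, vscale; simpl; ring. Qed.
Lemma bil_add_l x y z : bil (vadd x y) z = bil x z + bil y z.
Proof. unfold bil, vadd; simpl; ring. Qed.
Lemma bil_add_r x y z : bil z (vadd x y) = bil z x + bil z y.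
Proof. unfold bil, vadd; simpl; ring. Qed.
Lemma plk hm hn hx hy : det2 hx hy * det2 hm hn = det2 hm hy * det2 hx hn - det2 hm hx * det2 hy hn.
Proof. unfold det2; ring. Qed.
Lemma det_anti h k : det2 h k = - det2 k h.
Proof. unfold det2; ring. Qed.

Lemma decomp w h k :
  vscale (det2 h k ^ 2) w =
  vadd (vadd (vscale (bil w (Q k) / 2) (Q h)) (vscale (bil w (Q h) / 2) (Q k)))
       (vscale (- bil w (Bv h k)) (Bv h k)).
Proof. apply vec_eq; unfold vscale, vadd, bil, Q, Bv, det2; simpl; field. Qed.

Lemma rcs x y : sq x > 0 -> bil x y ^ 2 >= sq x * sq y.
Proof.
  unfold sq, bil; destruct x as [x0 x1 x2], y as [y0 y1 y2]; simpl; intros H.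
  set (z1 := x0*y1 - y0*x1). set (z2 := x0*y2 - y0*x2). set (cr := x1*y2 - x2*y1).
  assert (E : (x0 * y0 - x1 * y1 - x2 * y2) ^ 2 - (x0 * x0 - x1 * x1 - x2 * x2) * (y0 * y0 - y1 * y1 - y2 * y2)
     = z1*z1 + z2*z2 - cr*cr) by (unfold z1, z2, cr; ring).
  assert (L : (x1*x1+x2*x2)*(z1*z1+z2*z2) = (x1*z1+x2*z2)^2 + (x0*cr)^2) by (unfold z1, z2, cr; ring).
  assert (P : 0 < x0*x0) by nra.
  assert (H1 : 0 <= (x0*x0 - (x1*x1+x2*x2))*(z1*z1+z2*z2)) by (apply Rmult_le_pos; nra).
  assert (H2 : 0 <= (x1*z1+x2*z2)^2) by apply pow2_ge_0.
  assert (x0*x0*(z1*z1+z2*z2 - cr*cr) = (x0*x0 - (x1*x1+x2*x2))*(z1*z1+z2*z2) + (x1*z1+x2*z2)^2) by (unfold z1, z2, cr; ring).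
  assert (x0*x0*(z1*z1+z2*z2 - cr*cr) >= 0) by lra.
  assert (z1*z1+z2*z2 - cr*cr >= 0).
  { destruct (Rle_lt_dec 0 (z1*z1+z2*z2 - cr*cr)); [lra|nra]. }
  lra.
Qed.



Lemma perp_B z h k : bil z (Q h) = 0 -> bil z (Q k) = 0 -> det2 h k <> 0 ->
  z = vscale (- bil z (Bv h k) / det2 h k ^ 2) (Bv h k).
Proof.
  intros H1 H2 Hd. pose proof (decomp z h k) as E.
  rewrite H1, H2 in E.
  assert (Hd2 : det2 h k ^ 2 <> 0) by (apply pow_nonzero; auto).
  set (b := bil z (Bv h k)) in *. set (dd := det2 h k ^ 2) in *. clearbody b dd.
  destruct z as [z0 z1 z2]. unfold vscale, vadd in E. simpl in E.
  injection E; intros E2 E1 E0.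
  apply vec_eq; unfold vscale; simpl.
  - apply (Rmult_eq_reg_l dd); auto. rewrite E0. field. auto.
  - apply (Rmult_eq_reg_l dd); auto. rewrite E1. field. auto.
  - apply (Rmult_eq_reg_l dd); auto. rewrite E2. field. auto.
Qed.

Lemma span_QQ z h k : bil z (Bv h k) = 0 -> det2 h k <> 0 ->
  z = vadd (vscale (bil z (Q k) / (2 * det2 h k ^ 2)) (Q h)) (vscale (bil z (Q h) / (2 * det2 h k ^ 2)) (Q k)).
Proof.
  intros H1 Hd. pose proof (decomp z h k) as E.
  rewrite H1 in E.
  assert (Hd2 : det2 h k ^ 2 <> 0) by (apply pow_nonzero; auto).
  set (b1 := bil z (Q k)) in *. set (b2 := bil z (Q h)) in *. set (dd := det2 h k ^ 2) in *. clearbody b1 b2 dd.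
  destruct z as [z0 z1 z2]. unfold vscale, vadd in E. simpl in E.
  injection E; intros E2 E1 E0.
  apply vec_eq; unfold vscale, vadd; simpl.
  - apply (Rmult_eq_reg_l dd); auto. rewrite E0. field. auto.
  - apply (Rmult_eq_reg_l dd); auto. rewrite E1. field. auto.
  - apply (Rmult_eq_reg_l dd); auto. rewrite E2. field. auto.
Qed.

Lemma ideal_Q x : ideal x -> exists mu, 0 < mu /\ x = vscale mu (Q (hcoord x)).
Proof.
  unfold ideal, sq, bil, hcoord; destruct x as [x0 x1 x2]; simpl; intros [H0 Hp].
  destruct (Req_EM_T (x0 - x2) 0) as [e|e].
  - assert (x2 = x0) by lra. subst x2.
    assert (x1 = 0) by nra. subst x1.
    exists (/ (4 * x0)). split. apply Rinv_0_lt_compat; lra.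
    apply vec_eq; unfold vscale, Q; simpl; field; lra.
  - assert (x0 - x2 > 0) by nra.
    exists (/ (2 * (x0 - x2))). split. apply Rinv_0_lt_compat; lra.
    assert (H1 : x1 * x1 = x0 * x0 - x2 * x2) by lra.
    apply vec_eq; unfold vscale, Q; simpl; rewrite ?H1; field; lra.
Qed.


Lemma hnz x : ideal x -> fst (hcoord x) <> 0 \/ snd (hcoord x) <> 0.
Proof.
  intros Hx. destruct (ideal_Q x Hx) as [mu [Hmu E]].
  destruct Hx as [_ Hp]. rewrite E in Hp. unfold vscale, Q in Hp; simpl in Hp.
  destruct (Req_dec (fst (hcoord x)) 0) as [e|e]; [|left; auto].
  right. intro e'. rewrite e, e' in Hp. lra.
Qed.

Lemma prop_det0 h k : det2 h k = 0 -> (fst h <> 0 \/ snd h <> 0) ->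
  exists r, Q k = vscale (r ^ 2) (Q h).
Proof.
  destruct h as [p q], k as [p' q']; unfold det2; simpl; intros H [Hp|Hq].
  - exists (p' / p). apply vec_eq; unfold Q, vscale; simpl.
    all: assert (q' = p' * q / p) by (field_simplify; [|auto]; apply (Rmult_eq_reg_l p); auto; field_simplify; auto; lra).
    all: subst q'; field; auto.
  - exists (q' / q). apply vec_eq; unfold Q, vscale; simpl.
    all: assert (p' = q' * p / q) by (apply (Rmult_eq_reg_l q); auto; field_simplify; auto; lra).
    all: subst p'; field; auto.
Qed.

Lemma two_perp_zero hm hn k : det2 hm k = 0 -> det2 k hn = 0 -> det2 hm hn <> 0 ->
  fst k = 0 /\ snd k = 0.
Proof.
  destruct hm as [a1 a2], hn as [b1 b2], k as [k1 k2]; unfold det2; simpl; intros H1 H2 H3.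
  assert (E1 : (a1*b2 - b1*a2) * k1 = (k1*b2 - b1*k2) * a1 + (a1*k2 - k1*a2) * b1) by ring.
  assert (E2 : (a1*b2 - b1*a2) * k2 = (k1*b2 - b1*k2) * a2 + (a1*k2 - k1*a2) * b2) by ring.
  rewrite H1, H2 in *. split.
  - apply (Rmult_eq_reg_l (a1*b2 - b1*a2)); auto. lra.
  - apply (Rmult_eq_reg_l (a1*b2 - b1*a2)); auto. lra.
Qed.

Lemma orth_ideal z x : ideal x -> bil z x = 0 -> bil z (Q (hcoord x)) = 0.
Proof.
  intros Hx H. destruct (ideal_Q x Hx) as [mu [Hmu E]].
  rewrite E, bil_sc_r in H. apply Rmult_integral in H as [H|H]; lra.
Qed.

Lemma future x y : in_Vplus x -> in_Vplus y -> bil x y > 0.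
Proof.
  unfold in_Vplus, sq, bil; destruct x as [x0 x1 x2], y as [y0 y1 y2]; simpl.
  intros [H1 H2] [H3 H4].
  destruct (Rle_lt_dec (x1*y1 + x2*y2) 0). nra.
  assert ((x1*y1+x2*y2)^2 <= (x1*x1+x2*x2)*(y1*y1+y2*y2)).
  { assert (0 <= (x1*y2 - x2*y1)^2) by apply pow2_ge_0. nra. }
  assert ((x1*x1+x2*x2)*(y1*y1+y2*y2) < (x0*y0)^2).
  { assert (0 <= x1*x1+x2*x2) by nra. assert (0 <= y1*y1+y2*y2) by nra.
    assert ((x1*x1+x2*x2)*(y1*y1+y2*y2) <= (x1*x1+x2*x2)*(y0*y0)) by (apply Rmult_le_compat_l; lra).
    assert ((x1*x1+x2*x2)*(y0*y0) < (x0*x0)*(y0*y0)) by (apply Rmult_lt_compat_r; nra).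
    nra. }
  assert (0 < x0*y0) by nra.
  destruct (Rle_lt_dec (x0*y0) (x1*y1+x2*y2)) as [Hc|Hc]; [|lra].
  assert ((x0*y0)^2 <= (x1*y1+x2*y2)^2) by (apply pow_incr; lra). lra.
Qed.

Lemma boundary dl p q : ideal p -> ideal q -> bil p q > 0 -> line_in_Hplus dl p q -> bil p dl >= 0.
Proof.
  intros Hp Hq Hpq H.
  destruct (Rge_or_gt (bil p dl) 0) as [|Hn]; auto. exfalso.
  set (e := - bil p dl / (2 * (Rabs (bil q dl) + 1))).
  assert (Ha : 0 <= Rabs (bil q dl)) by apply Rabs_pos.
  assert (He : 0 < e) by (unfold e; apply Rdiv_lt_0_compat; lra).
  assert (Hon : on_line p q (vadd (vscale 1 p) (vscale e q))).
  { split; [|eauto].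
    destruct Hp as [Hp0 Hp1], Hq as [Hq0 Hq1]. unfold in_Vplus; split.
    - unfold sq in *. rewrite !bil_add_l, !bil_add_r, !bil_sc_l, !bil_sc_r, Hp0, Hq0, (bil_sym q p). nra.
    - unfold vadd, vscale; simpl. nra. }
  specialize (H _ Hon). unfold in_Hplus in H.
  rewrite bil_add_l, !bil_sc_l in H.
  assert (e * bil q dl <= e * Rabs (bil q dl)) by (apply Rmult_le_compat_l; [lra| apply Rle_abs]).
  assert (e * Rabs (bil q dl) < - bil p dl / 2).
  { unfold e. apply (Rmult_lt_reg_r (2 * (Rabs (bil q dl) + 1))). lra.
    field_simplify; try lra. }
  lra.
Qed.


Lemma angle_h x phi : ideal x -> at_angle x phi ->
  exists l, l <> 0 /\ fst (hcoord x) = l * sin (phi/2 + PI/4) /\ snd (hcoord x) = l * cos (phi/2 + PI/4).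
Proof.
  intros [H0 Hp] [E1 E2].
  set (be := phi/2 + PI/4) in *.
  assert (Hphi : phi = - (PI/2 - 2 * be)) by (unfold be; field).
  assert (Hc : cos phi = 2 * sin be * cos be) by (rewrite Hphi, cos_neg, cos_shift, sin_2a; ring).
  assert (Hs : sin phi = sin be * sin be - cos be * cos be) by (rewrite Hphi, sin_neg, sin_shift, cos_2a; ring).
  assert (Hsc : sin be * sin be + cos be * cos be = 1) by (pose proof (sin2_cos2 be); unfold Rsqr in *; lra).
  rewrite Hc in E1. rewrite Hs in E2. clearbody be.
  unfold hcoord. destruct (Req_EM_T (v0 x - v2 x) 0) as [e|e]; simpl.
  - assert (cos be = 0).
    { assert (v0 x * (2 * cos be * cos be) = 0) by nra. 
      apply Rmult_integral in H as [H|H]; [lra|]. nra. }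
    exists (2 * v0 x * sin be). rewrite H in *.
    assert (sin be * sin be = 1) by lra.
    repeat split.
    + intro Z. apply Rmult_integral in Z as [Z|Z]; [lra|]. rewrite Z in *; lra.
    + rewrite E2. nra.
    + rewrite E1. ring.
  - exists (2 * v0 x * cos be). repeat split.
    + intro Z. apply e. apply Rmult_integral in Z as [Z|Z]; [lra|]. rewrite E2, Z. rewrite Z in Hsc. nra.
    + rewrite E1. ring.
    + rewrite E2. nra.
Qed.


Lemma det_scale h k g g' l l' : fst h = l * fst g -> snd h = l * snd g ->
  fst k = l' * fst g' -> snd k = l' * snd g' -> det2 h k = l * l' * det2 g g'.
Proof. unfold det2; intros -> -> -> ->; ring. Qed.

Lemma pow2_gt_0 x : x <> 0 -> 0 < x ^ 2.
Proof. intros H. destruct (Rlt_or_le x 0); [nra|]. destruct H0; [nra|]. subst; lra. Qed.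

Lemma core (hm hn ha hb gm gn ga gb : R*R) lm ln la lb :
  lm <> 0 -> ln <> 0 -> la <> 0 -> lb <> 0 ->
  fst hm = lm * fst gm -> snd hm = lm * snd gm ->
  fst hn = ln * fst gn -> snd hn = ln * snd gn ->
  fst ha = la * fst ga -> snd ha = la * snd ga ->
  fst hb = lb * fst gb -> snd hb = lb * snd gb ->
  (det2 gn gm > 0 /\ det2 ga gm > 0 /\ det2 gb gm > 0 /\ det2 ga gn > 0 /\ det2 gb gn > 0 /\ det2 gb ga > 0) \/
  (det2 gn gm < 0 /\ det2 ga gm < 0 /\ det2 gb gm < 0 /\ det2 ga gn < 0 /\ det2 gb gn < 0 /\ det2 gb ga < 0) ->
  det2 hm hn <> 0 /\ det2 hm ha <> 0 /\ det2 hm hb <> 0 /\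
  (det2 ha hn / det2 hm ha) * (det2 hb hn / det2 hm hb) > 0 /\
  (det2 ha hn / det2 hm ha) * ((det2 ha hn / det2 hm ha) - (det2 hb hn / det2 hm hb)) < 0.
Proof.
  intros Zm Zn Za Zb m1 m2 n1 n2 a1 a2 b1 b2 Hor.
  assert (Hpl : det2 gn gm * det2 gb ga = det2 gb gn * det2 ga gm - det2 ga gn * det2 gb gm)
    by (unfold det2; ring).
  rewrite (det_scale hm hn gm gn lm ln), (det_scale hm ha gm ga lm la), (det_scale hm hb gm gb lm lb),
    (det_scale ha hn ga gn la ln), (det_scale hb hn gb gn lb ln) by auto.
  rewrite (det_anti gm gn), (det_anti gm ga), (det_anti gm gb).
  set (Anm := det2 gn gm) in *. set (Aam := det2 ga gm) in *. set (Abm := det2 gb gm) in *.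
  set (Aan := det2 ga gn) in *. set (Abn := det2 gb gn) in *. set (Aba := det2 gb ga) in *.
  clearbody Anm Aam Abm Aan Abn Aba.
  assert (Nz : Anm <> 0 /\ Aam <> 0 /\ Abm <> 0 /\ Aan <> 0 /\ Abn <> 0 /\ Aba <> 0) by (destruct Hor; lra).
  destruct Nz as (Z1 & Z2 & Z3 & Z4 & Z5 & Z6).
  assert (P1 : Aan * Abn > 0) by (destruct Hor; nra).
  assert (P2 : Aam * Abm > 0) by (destruct Hor; nra).
  assert (P3 : Aan * Anm * (Aba * Abm) > 0) by (destruct Hor as [(?&?&?&?&?&?)|(?&?&?&?&?&?)];
     [apply Rmult_lt_0_compat; apply Rmult_lt_0_compat; auto; nra
     |assert (Aan * Anm > 0) by nra; assert (Aba * Abm > 0) by nra; nra]).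
  assert (Q2 : 0 < (ln / lm) ^ 2) by (apply pow2_gt_0; unfold Rdiv; apply Rmult_integral_contrapositive_currified; [auto|apply Rinv_neq_0_compat; auto]).
  repeat split.
  - intro Z. apply Rmult_integral in Z as [Z|Z]; [apply Rmult_integral in Z as [Z|Z]|]; lra.
  - intro Z. apply Rmult_integral in Z as [Z|Z]; [apply Rmult_integral in Z as [Z|Z]|]; lra.
  - intro Z. apply Rmult_integral in Z as [Z|Z]; [apply Rmult_integral in Z as [Z|Z]|]; lra.
  - replace (la * ln * Aan / (lm * la * - Aam) * (lb * ln * Abn / (lm * lb * - Abm)))
      with ((ln/lm)^2 * ((Aan * Abn) / (Aam * Abm))) by (field; auto).
    apply Rmult_lt_0_compat; auto. apply Rdiv_lt_0_compat; auto.
  - replace (la * ln * Aan / (lm * la * - Aam) * (la * ln * Aan / (lm * la * - Aam) - lb * ln * Abn / (lm * lb * - Abm)))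
      with (- ((ln/lm)^2 * ((Aan * (Anm * Aba) * Abm) / (Aam^2 * Abm^2)))).
    + assert (0 < (ln/lm)^2 * ((Aan * (Anm * Aba) * Abm) / (Aam^2 * Abm^2))); [|lra].
      apply Rmult_lt_0_compat; auto. apply Rdiv_lt_0_compat.
      * replace (Aan * (Anm * Aba) * Abm) with (Aan * Anm * (Aba * Abm)) by ring. lra.
      * apply Rmult_lt_0_compat; apply pow2_gt_0; auto.
    + rewrite Hpl. field; auto.
Qed.


Definition gg (phi : R) : R * R := (sin (phi/2 + PI/4), cos (phi/2 + PI/4)).

Lemma det_gg p q : det2 (gg p) (gg q) = sin ((p - q) / 2).
Proof.
  unfold det2, gg; simpl.
  replace ((p - q) / 2) with ((p/2 + PI/4) - (q/2 + PI/4)) by field.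
  rewrite sin_minus. ring.
Qed.

Lemma det_gg_pos p q : p < q -> q < p + 2 * PI -> det2 (gg q) (gg p) > 0.
Proof. intros; rewrite det_gg; apply sin_gt_0; lra. Qed.

Lemma det_gg_neg p q : q < p -> p < q + 2 * PI -> det2 (gg q) (gg p) < 0.
Proof.
  intros; rewrite det_gg. replace ((q - p) / 2) with (- ((p - q) / 2)) by field.
  rewrite sin_neg. assert (0 < sin ((p - q) / 2)) by (apply sin_gt_0; lra). lra.
Qed.

Definition Dd (x y : vec) := det2 (hcoord x) (hcoord y).
Definition tt (m n x : vec) := Dd x n / Dd m x.

Lemma cons4 m n a b : ideal m -> ideal n -> ideal a -> ideal b -> consecutive4 m n a b ->
  Dd m n <> 0 /\ Dd m a <> 0 /\ Dd m b <> 0 /\ tt m n a * tt m n b > 0 /\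
  tt m n a * (tt m n a - tt m n b) < 0.
Proof.
  intros Hm Hn Ha Hb (p & q & r & s & Am & An & Aa & Ab & Hor).
  destruct (angle_h m p Hm Am) as (lm & Zm & m1 & m2).
  destruct (angle_h n q Hn An) as (ln & Zn & n1 & n2).
  destruct (angle_h a r Ha Aa) as (la & Za & a1 & a2).
  destruct (angle_h b s Hb Ab) as (lb & Zb & b1 & b2).
  unfold tt, Dd.
  apply (core _ _ _ _ (gg p) (gg q) (gg r) (gg s) lm ln la lb); auto.
  destruct Hor as [H|H]; [left|right]; repeat split;
    try (apply det_gg_pos; lra); try (apply det_gg_neg; lra).
Qed.


Lemma numeric ta tb tc td : ta*tb > 0 -> ta*(ta-tb) < 0 -> td*tc > 0 -> td*(td-tc) < 0 -> ta*tc < 0 ->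
  (ta-tb)*(tc-td) > 0 /\
  ((ta-tc)*(tb-td)+(ta-td)*(tb-tc))/((ta-tb)*(tc-td)) > 1 /\
  tb/ta > 1 /\ tc/td > 1 /\ -tc/tb > 0 /\
  2 * (((ta-tc)*(tb-td)+(ta-td)*(tb-tc))/((ta-tb)*(tc-td))) =
    4*((tb/ta)*(-tc/tb)+1)*(tc/td+(-tc/tb))/((-tc/tb)*(tb/ta-1)*(tc/td-1)) - 2.
Proof.
  intros H1 H2 H3 H4 H5.
  assert (S : (ta < 0 /\ tb < 0 /\ tc > 0 /\ td > 0 /\ ta - tb > 0 /\ td - tc < 0) \/
              (ta > 0 /\ tb > 0 /\ tc < 0 /\ td < 0 /\ ta - tb < 0 /\ td - tc > 0)).
  { destruct (Rlt_or_le ta 0) as [Ha|Ha].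
    - left. assert (tb < 0) by nra. assert (tc > 0) by nra. assert (td > 0) by nra.
      repeat split; auto; nra.
    - right. assert (ta <> 0) by (intro; subst; lra).
      assert (tb > 0) by nra. assert (tc < 0) by nra. assert (td < 0) by nra.
      repeat split; auto; nra. }
  assert (Za : ta <> 0) by (intro; subst; lra).
  assert (Zb : tb <> 0) by (intro; subst; lra).
  assert (Zc : tc <> 0) by (intro; subst; lra).
  assert (Zd : td <> 0) by (intro; subst; lra).
  assert (Zab : ta - tb <> 0) by (intro Z; rewrite Z in H2; lra).
  assert (Zdc : tc - td <> 0) by (intro Z; assert (td - tc = 0) by lra; rewrite H in H4; lra).
  assert (P : (ta-tb)*(tc-td) > 0) by (destruct S as [(?&?&?&?&?&?)|(?&?&?&?&?&?)]; nra).
  assert (P2 : (ta-td)*(tb-tc) > 0) by (destruct S as [(?&?&?&?&?&?)|(?&?&?&?&?&?)]; nra).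
  repeat split; auto.
  - assert (E : ((ta-tc)*(tb-td)+(ta-td)*(tb-tc))/((ta-tb)*(tc-td)) - 1 = 2 * (((ta-td)*(tb-tc)) / ((ta-tb)*(tc-td))))
      by (field; auto).
    assert (0 < ((ta-td)*(tb-tc)) / ((ta-tb)*(tc-td))) by (apply Rdiv_lt_0_compat; lra). lra.
  - assert (E : tb/ta - 1 = (-(ta*(ta-tb)))/(ta*ta)) by (field; auto).
    assert (0 < (-(ta*(ta-tb)))/(ta*ta)) by (apply Rdiv_lt_0_compat; nra). lra.
  - assert (E : tc/td - 1 = (-(td*(td-tc)))/(td*td)) by (field; auto).
    assert (0 < (-(td*(td-tc)))/(td*td)) by (apply Rdiv_lt_0_compat; nra). lra.
  - assert (E : -tc/tb = (-(tc*tb))/(tb*tb)) by (field; auto).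
    rewrite E. apply Rdiv_lt_0_compat; [|nra].
    destruct S as [(?&?&?&?&?&?)|(?&?&?&?&?&?)]; nra.
  - assert (Z1 : tb/ta - 1 <> 0) by (replace (tb/ta - 1) with ((tb - ta)/ta) by (field; auto);
        unfold Rdiv; apply Rmult_integral_contrapositive_currified; [lra|apply Rinv_neq_0_compat; auto]).
    assert (Z2 : tc/td - 1 <> 0) by (replace (tc/td - 1) with ((tc - td)/td) by (field; auto);
        unfold Rdiv; apply Rmult_integral_contrapositive_currified; [lra|apply Rinv_neq_0_compat; auto]).
    field; repeat split; auto. intro Z; apply Zab; lra.
Qed.

Lemma logs X1 X2 Y : X1 > 0 -> X2 > 0 -> Y > 0 -> X1 <> 1 -> X2 <> 1 ->
  4 * (cosh ((ln X1 + ln Y) / 2) * cosh ((ln X2 - ln Y) / 2)) / (sinh (ln X1 / 2) * sinh (ln X2 / 2)) - 2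
  = 4*(X1*Y+1)*(X2+Y)/(Y*(X1-1)*(X2-1)) - 2.
Proof.
  intros H1 H2 H3 N1 N2.
  assert (K : forall X, X > 0 -> exp (ln X / 2) * exp (ln X / 2) = X).
  { intros X HX. rewrite <- exp_plus. replace (ln X / 2 + ln X / 2) with (ln X) by field. apply exp_ln; auto. }
  set (p := exp (ln X1 / 2)). set (q := exp (ln X2 / 2)). set (r := exp (ln Y / 2)).
  assert (Ep : p * p = X1) by apply K, H1.
  assert (Eq : q * q = X2) by apply K, H2.
  assert (Er : r * r = Y) by apply K, H3.
  assert (Pp : p > 0) by apply exp_pos. assert (Pq : q > 0) by apply exp_pos. assert (Pr : r > 0) by apply exp_pos.
  unfold cosh, sinh.
  replace ((ln X1 + ln Y) / 2) with (ln X1 / 2 + ln Y / 2) by field.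
  replace ((ln X2 - ln Y) / 2) with (ln X2 / 2 + - (ln Y / 2)) by field.
  rewrite ?exp_Ropp, ?exp_plus, ?exp_Ropp.
  fold p q r.
  rewrite <- Ep, <- Eq, <- Er.
  assert (p * p - 1 <> 0) by (intro; apply N1; lra).
  assert (q * q - 1 <> 0) by (intro; apply N2; lra).
  assert (p - /p <> 0).
  { intro Z. apply H. replace (p*p - 1) with (p * (p - /p)) by (field; lra). rewrite Z; ring. }
  assert (q - /q <> 0).
  { intro Z. apply H0. replace (q*q - 1) with (q * (q - /q)) by (field; lra). rewrite Z; ring. }
  field. repeat split; try lra.
Qed.


Lemma sqrt_ge_of_sq b s : 0 <= b -> 0 <= s -> b ^ 2 >= s -> b >= sqrt s.
Proof.
  intros Hb Hs H. destruct (Rle_lt_dec (sqrt s) b); [lra|].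
  assert (sqrt s * sqrt s = s) by (apply sqrt_sqrt; lra).
  assert (0 <= sqrt s) by apply sqrt_pos. nra.
Qed.

Lemma dist_lower d1 d2 x y : sq d1 = -2 -> sq d2 = -2 -> bil d1 d2 / 2 > 1 ->
  in_Vplus x -> in_Vplus y -> bil x d1 = 0 -> bil y d2 = 0 ->
  bil x y / sqrt (sq x * sq y) >= bil d1 d2 / 2.
Proof.
  intros S1 S2 HC Hx Hy O1 O2. set (C := bil d1 d2 / 2) in *.
  assert (Pb : bil x y > 0) by (apply future; auto).
  pose proof (rcs y (vadd x (vscale (bil x d2 / 2) d2)) (proj1 Hy)) as R1.
  pose proof (rcs x (vadd d2 (vscale C d1)) (proj1 Hx)) as R2.
  unfold sq in R1, R2.
  rewrite ?bil_add_l, ?bil_add_r, ?bil_sc_l, ?bil_sc_r in R1, R2.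
  unfold sq in S1, S2, Hx, Hy.
  rewrite O2, (bil_sym d2 x), (bil_sym y x), S2 in R1.
  rewrite O1, S1, S2, (bil_sym d2 d1) in R2.
  assert (E2 : bil d1 d2 = 2 * C) by (unfold C; field). rewrite E2 in R2.
  destruct Hx as [Hx _], Hy as [Hy _]. unfold sq in Hx, Hy.
  set (X := bil x x) in *. set (Yy := bil y y) in *. set (b := bil x y) in *. set (e := bil x d2) in *.
  assert (B : b ^ 2 >= C^2 * (X * Yy)).
  { assert (b^2 >= Yy * (X + e^2/2)) by (ring_simplify in R1; ring_simplify; lra).
    assert (e^2 >= X * (2*C^2 - 2)) by (ring_simplify in R2; ring_simplify; lra).
    assert (Yy * e^2 >= Yy * (X * (2*C^2 - 2))) by (apply Rmult_ge_compat_l; lra).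
    nra. }
  assert (H : b >= sqrt (C^2 * (X * Yy))) by (apply sqrt_ge_of_sq; [lra| |exact B]; apply Rmult_le_pos; [apply pow2_ge_0|nra]).
  rewrite sqrt_mult_alt in H by nra. rewrite sqrt_pow2 in H by lra.
  assert (0 < sqrt (X * Yy)) by (apply sqrt_lt_R0; nra).
  apply Rle_ge. apply (Rmult_le_reg_r (sqrt (X*Yy))); auto. unfold Rdiv. rewrite Rmult_assoc, Rinv_l by lra. lra.
Qed.

Lemma dist_attain d1 d2 s s' : sq d1 = -2 -> sq d2 = -2 -> bil d1 d2 / 2 > 1 ->
  in_Vplus (vscale s (vadd d2 (vscale (bil d1 d2 / 2) d1))) ->
  in_Vplus (vscale s' (vadd d1 (vscale (bil d1 d2 / 2) d2))) ->
  bil (vscale s (vadd d2 (vscale (bil d1 d2 / 2) d1))) (vscale s' (vadd d1 (vscale (bil d1 d2 / 2) d2)))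
   / sqrt (sq (vscale s (vadd d2 (vscale (bil d1 d2 / 2) d1))) * sq (vscale s' (vadd d1 (vscale (bil d1 d2 / 2) d2))))
  = bil d1 d2 / 2.
Proof.
  intros S1 S2 HC Hx Hy.
  pose proof (future _ _ Hx Hy) as F.
  set (C := bil d1 d2 / 2) in *.
  assert (E2 : bil d1 d2 = 2 * C) by (unfold C; field).
  unfold sq in S1, S2.
  set (x := vscale s (vadd d2 (vscale C d1))) in *.
  set (y := vscale s' (vadd d1 (vscale C d2))) in *.
  assert (Exy : bil x y = (s*s') * (2*C*(C^2-1))).
  { unfold x, y. rewrite ?bil_sc_l, ?bil_sc_r, ?bil_add_l, ?bil_add_r, ?bil_sc_l, ?bil_sc_r.
    rewrite ?(bil_sym d2 d1), S1, S2, E2. ring. }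
  assert (Exx : sq x = s^2 * (2*C^2-2)).
  { unfold x, sq. rewrite ?bil_sc_l, ?bil_sc_r, ?bil_add_l, ?bil_add_r, ?bil_sc_l, ?bil_sc_r.
    rewrite ?(bil_sym d2 d1), S1, S2, E2. ring. }
  assert (Eyy : sq y = s'^2 * (2*C^2-2)).
  { unfold y, sq. rewrite ?bil_sc_l, ?bil_sc_r, ?bil_add_l, ?bil_add_r, ?bil_sc_l, ?bil_sc_r.
    rewrite ?(bil_sym d2 d1), S1, S2, E2. ring. }
  rewrite Exy in F |- *. rewrite Exx, Eyy.
  assert (P : 0 < 2*C*(C^2-1)) by nra.
  assert (Pss : s * s' > 0).
  { destruct (Rle_lt_dec (s*s') 0); [|lra]. nra. }
  replace (s^2 * (2*C^2-2) * (s'^2 * (2*C^2-2))) with ((s*s' * (2*C^2-2))^2) by ring.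
  rewrite sqrt_pow2 by nra.
  field. split; nra.
Qed.

Lemma acosh_ex C : C >= 1 -> exists r, 0 <= r /\ cosh r = C.
Proof.
  intros HC. assert (Hs : 0 <= sqrt (C^2 - 1)) by apply sqrt_pos.
  assert (Hss : sqrt (C^2-1) * sqrt (C^2-1) = C^2 - 1) by (apply sqrt_sqrt; nra).
  exists (ln (C + sqrt (C^2 - 1))). split.
  - rewrite <- ln_1. destruct (Req_dec (C + sqrt (C^2-1)) 1) as [e|e]; [rewrite e; lra|left; apply ln_increasing; lra].
  - unfold cosh. rewrite exp_Ropp, exp_ln by lra.
    assert (Inv : / (C + sqrt (C^2-1)) = C - sqrt (C^2-1)).
    { apply (Rmult_eq_reg_l (C + sqrt (C^2-1))); [|lra]. rewrite Rinv_r by lra. nra. }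
    rewrite Inv. field.
Qed.

Lemma cosh_lt r1 r2 : 0 <= r1 -> r1 < r2 -> cosh r1 < cosh r2.
Proof.
  intros H1 H2. unfold cosh. rewrite !exp_Ropp.
  assert (E1 : 1 <= exp r1) by (rewrite <- exp_0; destruct H1; [left; apply exp_increasing; auto|subst; lra]).
  assert (E2 : exp r1 < exp r2) by (apply exp_increasing; auto).
  set (a := exp r1) in *. set (b := exp r2) in *.
  assert (/a - /b = (b - a) / (a*b)) by (field; lra).
  assert ((b - a)/(a*b) < b - a).
  { apply (Rmult_lt_reg_r (a*b)); [nra|]. unfold Rdiv. rewrite Rmult_assoc, Rinv_l by nra. assert (a*b > 1) by nra. assert (0 < (b-a)*(a*b-1)) by (apply Rmult_lt_0_compat; lra). nra. }
  lra.
Qed.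


Lemma Dd_anti x y : Dd x y = - Dd y x.
Proof. unfold Dd; apply det_anti. Qed.

Lemma Dxy m n x y : Dd m n <> 0 -> Dd m x <> 0 -> Dd m y <> 0 ->
  Dd x y = Dd m x * Dd m y * (tt m n x - tt m n y) / Dd m n.
Proof.
  intros H1 H2 H3. apply (Rmult_eq_reg_r (Dd m n)); auto.
  transitivity (Dd m y * Dd x n - Dd m x * Dd y n). { unfold Dd; apply plk. }
  unfold tt. field; auto.
Qed.

Lemma bil_ideal x y : ideal x -> ideal y -> Dd x y <> 0 -> bil x y > 0.
Proof.
  intros Hx Hy Z. destruct (ideal_Q x Hx) as (mx & Px & Ex). destruct (ideal_Q y Hy) as (my & Py & Ey).
  rewrite Ex, Ey, bil_sc_l, bil_sc_r, bil_QQ. fold (Dd x y).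
  assert (0 < Dd x y ^ 2) by (apply pow2_gt_0; auto).
  apply Rmult_lt_0_compat; auto. apply Rmult_lt_0_compat; auto. lra.
Qed.

Lemma bil_xB x l h k : ideal x -> exists mu, mu > 0 /\
  bil x (vscale l (Bv h k)) = l * mu * 2 * det2 h (hcoord x) * det2 k (hcoord x).
Proof.
  intros Hx. destruct (ideal_Q x Hx) as (mx & Px & Ex). exists mx; split; auto.
  rewrite Ex at 1. rewrite bil_sc_l, bil_sc_r, bil_QB. ring.
Qed.

Lemma perp_line z x y : ideal x -> ideal y -> Dd x y <> 0 -> bil z x = 0 -> bil z y = 0 ->
  exists l, z = vscale l (Bv (hcoord x) (hcoord y)).
Proof.
  intros Hx Hy Z O1 O2. eexists. apply perp_B; auto; apply orth_ideal; auto.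
Qed.

Lemma sq_sc l v : sq (vscale l v) = l ^ 2 * sq v.
Proof. unfold sq; rewrite bil_sc_l, bil_sc_r; ring. Qed.

Lemma cr_t m n x y : Dd m x <> 0 -> Dd m y <> 0 -> Dd x n <> 0 ->
  cross_ratio m n x y = tt m n y / tt m n x.
Proof.
  intros H1 H2 H3. unfold cross_ratio, tt. cbv zeta. fold (Dd x m) (Dd y n) (Dd x n) (Dd y m).
  rewrite (Dd_anti x m), (Dd_anti y m). field. unfold Dd in *; auto.
Qed.

Lemma exist_pt a b l f : ideal a -> ideal b -> Dd a b <> 0 -> l <> 0 ->
  bil f (vscale l (Bv (hcoord a) (hcoord b))) = 0 -> sq f > 0 ->
  exists s, on_line a b (vscale s f).
Proof.
  intros Ha Hb Z Zl O Sf.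
  rewrite bil_sc_r in O. apply Rmult_integral in O as [O|O]; [contradiction|].
  pose proof (span_QQ f _ _ O Z) as Ef.
  set (al := bil f (Q (hcoord b)) / (2 * det2 (hcoord a) (hcoord b) ^ 2)) in Ef.
  set (be := bil f (Q (hcoord a)) / (2 * det2 (hcoord a) (hcoord b) ^ 2)) in Ef.
  clearbody al be.
  destruct (ideal_Q a Ha) as (ma & Pa & Ea). destruct (ideal_Q b Hb) as (mb & Pb & Eb).
  set (ha := hcoord a) in *. set (hb := hcoord b) in *. clearbody ha hb.
  assert (V : v0 f <> 0).
  { intro V. unfold sq, bil in Sf. rewrite V in Sf. nra. }
  assert (Hs : exists s, s * s = 1 /\ s * v0 f > 0).
  { destruct (Rlt_or_le 0 (v0 f)). exists 1; split; lra. exists (-1); split; [lra|]. destruct H; [lra|contradiction]. }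
  destruct Hs as (s & Ss & Ps).
  exists s. split.
  - split. rewrite sq_sc. simpl. nra. unfold vscale; simpl. lra.
  - exists (s * al / ma), (s * be / mb).
    rewrite Ef at 1. rewrite Ea, Eb.
    apply vec_eq; unfold vscale, vadd; simpl; field; lra.
Qed.

Lemma side x m n l : ideal x -> Dd m x <> 0 -> exists mu, mu > 0 /\
  bil x (vscale l (Bv (hcoord m) (hcoord n))) = - (2 * mu * (Dd m x)^2) * (l * tt m n x).
Proof.
  intros Hx Z. destruct (bil_xB x l (hcoord m) (hcoord n) Hx) as (mu & P & E).
  exists mu; split; auto. rewrite E. unfold tt. fold (Dd m x) (Dd n x). rewrite (Dd_anti n x). field. auto.
Qed.

Lemma pos_of_nonneg_coef k u : k > 0 -> - k * u >= 0 -> u <= 0.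
Proof. intros. nra. Qed.


Ltac clear_neq := repeat match goal with H : _ <> _ |- _ => clear H end.
Ltac lra' := clear_neq; lra.
Ltac nra' := clear_neq; nra.

Theorem lemma8p1p4 (m n a b c d nu delta1 delta2 c' : vec) :
  ideal m -> ideal n -> ideal a -> ideal b -> ideal c -> ideal d ->
  orth_to_line nu m n -> sq nu < 0 ->
  line_in_Hplus nu a b -> line_in_Hplus (vscale (-1) nu) c d ->
  consecutive4 m n a b -> consecutive4 m n d c ->
  sq delta1 = -2 -> orth_to_line delta1 a b -> line_in_Hplus delta1 m n ->
  sq delta2 = -2 -> orth_to_line delta2 c d -> line_in_Hplus delta2 m n ->
  other_terminal_orth m n c c' ->
  let theta1 := theta m n a b in
  let theta2 := theta m n d c in
  let theta12 := theta m n b c' in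
  exists rho : R, lines_dist_is a b c d rho /\
    bil delta1 delta2 = 2 * cosh rho /\
    2 * cosh rho =
      4 * (cosh ((theta1 + theta12) / 2) * cosh ((theta2 - theta12) / 2))
        / (sinh (theta1 / 2) * sinh (theta2 / 2)) - 2.
Proof.
  intros Hm Hn Ha Hb Hc Hd [Onu1 Onu2] Snu Lnu1 Lnu2 C1 C2 S1 [O1a O1b] L1 S2 [O2c O2d] L2
    (Ic' & Nmul & n1 & n2 & Zn1 & Zn2 & [On1c On1c'] & [On2m On2n] & B12).
  intros theta1 theta2 theta12.
  destruct (cons4 m n a b Hm Hn Ha Hb C1) as (Zmn & Zma & Zmb & T1 & T2).
  destruct (cons4 m n d c Hm Hn Hd Hc C2) as (_ & Zmd & Zmc & T3 & T4).
  set (ta := tt m n a) in *. set (tb := tt m n b) in *.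
  set (tc := tt m n c) in *. set (td := tt m n d) in *.
  assert (Zta : ta <> 0) by (intro Z; rewrite Z in T1; clear - T1; lra).
  assert (Ztb : tb <> 0) by (intro Z; rewrite Z in T1; clear - T1; lra).
  assert (Ztc : tc <> 0) by (intro Z; rewrite Z in T3; clear - T3; lra).
  assert (Ztd : td <> 0) by (intro Z; rewrite Z in T3; clear - T3; lra).
  assert (Zab : Dd a b <> 0).
  { rewrite (Dxy m n a b) by auto. fold ta tb. intro Z.
    unfold Rdiv in Z. apply Rmult_integral in Z as [Z|Z]; [|apply Rinv_neq_0_compat in Zmn; contradiction].
    apply Rmult_integral in Z as [Z|Z]; [apply Rmult_integral in Z as [Z|Z]; contradiction|].
    assert (ta = tb) by (clear - Z; lra). rewrite H in T2. clear - T2. lra. }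
  assert (Zcd : Dd c d <> 0).
  { rewrite (Dxy m n c d) by auto. fold tc td. intro Z.
    unfold Rdiv in Z. apply Rmult_integral in Z as [Z|Z]; [|apply Rinv_neq_0_compat in Zmn; contradiction].
    apply Rmult_integral in Z as [Z|Z]; [apply Rmult_integral in Z as [Z|Z]; contradiction|].
    assert (td = tc) by (clear - Z; lra). rewrite H in T4. clear - T4. lra. }
  assert (Zan : Dd a n <> 0).
  { intro Z. apply Zta. unfold ta, tt. rewrite Z. unfold Rdiv; ring. }
  assert (Zbn : Dd b n <> 0).
  { intro Z. apply Ztb. unfold tb, tt. rewrite Z. unfold Rdiv; ring. }
  assert (Zdn : Dd d n <> 0).
  { intro Z. apply Ztd. unfold td, tt. rewrite Z. unfold Rdiv; ring. }
  destruct (perp_line nu m n Hm Hn Zmn Onu1 Onu2) as (lnu & Enu).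
  assert (Zlnu : lnu <> 0).
  { intro Z. rewrite Enu, Z, sq_sc in Snu. clear - Snu; lra. }
  assert (Sa : lnu * ta < 0).
  { pose proof (boundary nu a b Ha Hb (bil_ideal a b Ha Hb Zab) Lnu1) as G.
    destruct (side a m n lnu Ha Zma) as (mu & Pmu & E). rewrite <- Enu in E. rewrite E in G.
    fold ta in G. assert (0 < Dd m a ^ 2) by (apply pow2_gt_0; auto).
    assert (lnu * ta <= 0) by (apply (pos_of_nonneg_coef (2 * mu * Dd m a ^ 2)); auto;
       apply Rmult_lt_0_compat; [clear - Pmu; lra|auto]).
    destruct H0; auto. exfalso. apply Rmult_integral in H0 as [|]; contradiction. }
  assert (Sc : lnu * tc > 0).
  { pose proof (boundary _ c d Hc Hd (bil_ideal c d Hc Hd Zcd) Lnu2) as G.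
    rewrite bil_sc_r in G.
    destruct (side c m n lnu Hc Zmc) as (mu & Pmu & E). rewrite <- Enu in E. rewrite E in G.
    fold tc in G. assert (0 < Dd m c ^ 2) by (apply pow2_gt_0; auto).
    assert (- (lnu * tc) <= 0).
    { apply (pos_of_nonneg_coef (2 * mu * Dd m c ^ 2)). apply Rmult_lt_0_compat; [clear - Pmu; lra|auto].
      replace (- (2 * mu * Dd m c ^ 2) * - (lnu * tc)) with (-1 * (- (2 * mu * Dd m c ^ 2) * (lnu * tc))) by ring. exact G. }
    assert (Hge : lnu * tc >= 0) by (clear - H0; lra). destruct Hge as [Hgt|e]; [exact Hgt|]. apply Rmult_integral in e as [|]; contradiction. }
  assert (T5 : ta * tc < 0).
  { assert (0 < lnu ^ 2) by (apply pow2_gt_0; auto).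
    assert ((lnu * ta) * (lnu * tc) < 0) by (apply Rmult_neg_pos; auto).
    replace ((lnu * ta) * (lnu * tc)) with (lnu^2 * (ta * tc)) in H0 by ring.
    destruct (Rlt_or_le (ta*tc) 0) as [Hl|Hl]; auto. assert (0 <= lnu^2 * (ta*tc)) by (apply Rmult_le_pos; [clear - H; lra|exact Hl]). clear - H0 H1. lra. }
  destruct (numeric ta tb tc td T1 T2 T3 T4 T5) as (N1 & N2 & N3 & N4 & N5 & N6).
  destruct (perp_line delta1 a b Ha Hb Zab O1a O1b) as (l1 & E1).
  destruct (perp_line delta2 c d Hc Hd Zcd O2c O2d) as (l2 & E2).
  assert (Q1 : l1 ^ 2 * Dd a b ^ 2 = 2).
  { rewrite E1, sq_sc, sq_B in S1. unfold Dd. clear - S1; lra. }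
  assert (Q2 : l2 ^ 2 * Dd c d ^ 2 = 2).
  { rewrite E2, sq_sc, sq_B in S2. unfold Dd. clear - S2; lra. }
  assert (Zl1 : l1 <> 0) by (intro Z; rewrite Z in Q1; clear - Q1; lra).
  assert (Zl2 : l2 <> 0) by (intro Z; rewrite Z in Q2; clear - Q2; lra).
  assert (bmn : bil m n > 0) by (apply bil_ideal; auto).
  assert (P1 : l1 * Dd m a * Dd m b > 0).
  { pose proof (boundary _ m n Hm Hn bmn L1) as G.
    destruct (bil_xB m l1 (hcoord a) (hcoord b) Hm) as (mu & Pmu & E). rewrite <- E1 in E.
    rewrite E in G. fold (Dd a m) (Dd b m) in G. rewrite (Dd_anti a m), (Dd_anti b m) in G.
    replace (l1 * mu * 2 * - Dd m a * - Dd m b) with ((2 * mu) * (l1 * Dd m a * Dd m b)) in G by ring.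
    destruct (Rlt_or_le 0 (l1 * Dd m a * Dd m b)) as [|Hle]; auto. exfalso.
    destruct Hle as [Hlt|Heq].
    - assert ((2*mu) * (l1 * Dd m a * Dd m b) < 0) by (apply Rmult_pos_neg; [clear - Pmu; lra|exact Hlt]). clear - G H. lra.
    - apply Rmult_integral in Heq as [Heq|Heq]; [apply Rmult_integral in Heq as [|]|]; contradiction. }
  assert (P2 : l2 * Dd m c * Dd m d > 0).
  { pose proof (boundary _ m n Hm Hn bmn L2) as G.
    destruct (bil_xB m l2 (hcoord c) (hcoord d) Hm) as (mu & Pmu & E). rewrite <- E2 in E.
    rewrite E in G. fold (Dd c m) (Dd d m) in G. rewrite (Dd_anti c m), (Dd_anti d m) in G.
    replace (l2 * mu * 2 * - Dd m c * - Dd m d) with ((2 * mu) * (l2 * Dd m c * Dd m d)) in G by ring.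
    destruct (Rlt_or_le 0 (l2 * Dd m c * Dd m d)) as [|Hle]; auto. exfalso.
    destruct Hle as [Hlt|Heq].
    - assert ((2*mu) * (l2 * Dd m c * Dd m d) < 0) by (apply Rmult_pos_neg; [clear - Pmu; lra|exact Hlt]). clear - G H. lra.
    - apply Rmult_integral in Heq as [Heq|Heq]; [apply Rmult_integral in Heq as [|]|]; contradiction. }
  set (K := (ta-tc)*(tb-td)+(ta-td)*(tb-tc)) in *.
  set (Cn := K / ((ta-tb)*(tc-td))) in *.
  assert (Ebil : bil delta1 delta2 = 2 * Cn).
  { assert (Eb : bil delta1 delta2 = l1*l2*(Dd a c * Dd b d + Dd a d * Dd b c)).
    { rewrite E1, E2, bil_sc_l, bil_sc_r, bil_BB. unfold Dd. ring. }
    set (W := l1 * Dd m a * Dd m b * (l2 * Dd m c * Dd m d) / Dd m n ^ 2).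
    assert (PW : W > 0).
    { unfold W. apply Rdiv_lt_0_compat. apply Rmult_lt_0_compat; auto. apply pow2_gt_0; auto. }
    assert (EW : l1 * Dd a b * (l2 * Dd c d) = W * ((ta-tb)*(tc-td))).
    { rewrite (Dxy m n a b), (Dxy m n c d) by auto. fold ta tb tc td. unfold W. field. auto. }
    assert (EW2 : (W * ((ta-tb)*(tc-td))) ^ 2 = 4).
    { rewrite <- EW. replace ((l1 * Dd a b * (l2 * Dd c d))^2) with ((l1^2*Dd a b^2)*(l2^2*Dd c d^2)) by ring. rewrite Q1, Q2. ring. }
    assert (PW2 : W * ((ta-tb)*(tc-td)) > 0) by (apply Rmult_lt_0_compat; auto).
    assert (EW3 : W * ((ta-tb)*(tc-td)) = 2).
    { set (u := W * ((ta-tb)*(tc-td))) in *. clearbody u. clear - EW2 PW2; nra. }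
    rewrite Eb. rewrite (Dxy m n a c), (Dxy m n b d), (Dxy m n a d), (Dxy m n b c) by auto.
    fold ta tb tc td.
    assert (Nz : (ta-tb)*(tc-td) <> 0) by (clear - N1; lra).
    assert (Nab : ta - tb <> 0) by (intro Z; apply Nz; rewrite Z; ring).
    assert (Ncd : tc - td <> 0) by (intro Z; apply Nz; rewrite Z; ring).
    assert (EWv : W = 2 / ((ta-tb)*(tc-td))).
    { apply (Rmult_eq_reg_r ((ta-tb)*(tc-td))); [|exact Nz]. rewrite EW3. field. auto. }
    unfold Cn, K. 
    transitivity (W * K). { unfold W, K. field. auto. }
    rewrite EWv. unfold K. field. auto. }
  assert (Zcc : Dd c c' <> 0).
  { intro Z. destruct (prop_det0 _ _ Z (hnz c Hc)) as (r & Er).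
    destruct (ideal_Q c Hc) as (mc & Pc & Ec). destruct (ideal_Q c' Ic') as (mc' & Pc' & Ec').
    apply (Nmul (mc' * r^2 / mc)).
    rewrite Ec' at 1. rewrite Er.
    set (hc := hcoord c) in *. clearbody hc. rewrite Ec at 1.
    apply vec_eq; unfold vscale; simpl; field; clear - Pc; lra. }
  destruct (perp_line n1 c c' Hc Ic' Zcc On1c On1c') as (k1 & En1).
  destruct (perp_line n2 m n Hm Hn Zmn On2m On2n) as (k2 & En2).
  assert (Zk1 : k1 <> 0).
  { intro Z. apply Zn1. rewrite En1, Z. apply vec_eq; unfold vscale; simpl; ring. }
  assert (Zk2 : k2 <> 0).
  { intro Z. apply Zn2. rewrite En2, Z. apply vec_eq; unfold vscale; simpl; ring. }
  assert (R : Dd c m * Dd c' n + Dd c n * Dd c' m = 0).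
  { rewrite En1, En2, bil_sc_l, bil_sc_r, bil_BB in B12.
    apply Rmult_integral in B12 as [B|B]; [contradiction|].
    apply Rmult_integral in B as [B|B]; [contradiction|]. unfold Dd; exact B. }
  rewrite (Dd_anti c m), (Dd_anti c' m) in R.
  assert (Zmc' : Dd m c' <> 0).
  { intro Z. rewrite Z in R.
    assert (Z2 : Dd c' n = 0).
    { assert (- Dd m c * Dd c' n = 0) by (clear - R; lra). apply Rmult_integral in H as [H|H]; [|auto]. exfalso; apply Zmc; clear - H; lra. }
    destruct (two_perp_zero (hcoord m) (hcoord n) (hcoord c') Z Z2 Zmn) as [F1 F2].
    destruct (hnz c' Ic'); contradiction. }
  assert (Tc' : tt m n c' = - tc).
  { unfold tc, tt. apply (Rmult_eq_reg_l (Dd m c' * Dd m c)).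
    - field_simplify; auto. clear - R; lra.
    - apply Rmult_integral_contrapositive_currified; auto. }
  assert (Zcn : Dd c n <> 0).
  { intro Z. apply Ztc. unfold tc, tt. rewrite Z. unfold Rdiv; ring. }
  assert (Th1 : theta1 = ln (tb / ta)) by (unfold theta1, theta; rewrite cr_t by auto; reflexivity).
  assert (Th2 : theta2 = ln (tc / td)) by (unfold theta2, theta; rewrite cr_t by auto; reflexivity).
  assert (Th12 : theta12 = ln (- tc / tb)) by (unfold theta12, theta; rewrite cr_t, Tc' by auto; reflexivity).
  clearbody theta1 theta2 theta12. subst theta1 theta2 theta12.
  rewrite logs by (clear - N3 N4 N5; lra).
  destruct (acosh_ex Cn) as (rho & Prho & Crho); [clear - N2; lra|].
  exists rho. split; [|split; [rewrite Crho; auto| rewrite Crho; auto]].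
  assert (EC : bil delta1 delta2 / 2 = Cn) by (rewrite Ebil; field).
  assert (HC : bil delta1 delta2 / 2 > 1) by (rewrite EC; clear - N2; lra).
  assert (S1' : bil delta1 delta1 = -2) by exact S1.
  assert (S2' : bil delta2 delta2 = -2) by exact S2.
  split.
  - set (f := vadd delta2 (vscale (bil delta1 delta2 / 2) delta1)).
    set (g := vadd delta1 (vscale (bil delta1 delta2 / 2) delta2)).
    assert (Of : bil f (vscale l1 (Bv (hcoord a) (hcoord b))) = 0).
    { rewrite <- E1. unfold f. rewrite bil_add_l, bil_sc_l, S1', (bil_sym delta2 delta1). field. }
    assert (Og : bil g (vscale l2 (Bv (hcoord c) (hcoord d))) = 0).
    { rewrite <- E2. unfold g. rewrite bil_add_l, bil_sc_l, S2'. field. }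
    assert (Sf : sq f > 0).
    { unfold f, sq. rewrite ?bil_add_l, ?bil_add_r, ?bil_sc_l, ?bil_sc_r, S1', S2', (bil_sym delta2 delta1).
      rewrite EC. rewrite Ebil. clear - N2; nra. }
    assert (Sg : sq g > 0).
    { unfold g, sq. rewrite ?bil_add_l, ?bil_add_r, ?bil_sc_l, ?bil_sc_r, S1', S2', (bil_sym delta2 delta1).
      rewrite EC. rewrite Ebil. clear - N2; nra. }
    destruct (exist_pt a b l1 f Ha Hb Zab Zl1 Of Sf) as (s & Lx).
    destruct (exist_pt c d l2 g Hc Hd Zcd Zl2 Og Sg) as (s' & Ly).
    exists (vscale s f), (vscale s' g). split; [auto|split; [auto|]].
    split; auto. rewrite Crho, <- EC. symmetry. apply dist_attain; auto.
    + destruct Lx; auto.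
    + destruct Ly; auto.
  - intros x y r Lx Ly [Pr Hr].
    destruct (Rle_lt_dec rho r) as [|Hlt]; auto. exfalso.
    assert (Ox : bil x delta1 = 0).
    { destruct Lx as [_ (al & be & ->)]. rewrite bil_add_l, !bil_sc_l, (bil_sym a), (bil_sym b), O1a, O1b. ring. }
    assert (Oy : bil y delta2 = 0).
    { destruct Ly as [_ (al & be & ->)]. rewrite bil_add_l, !bil_sc_l, (bil_sym c), (bil_sym d), O2c, O2d. ring. }
    pose proof (dist_lower delta1 delta2 x y S1 S2 HC (proj1 Lx) (proj1 Ly) Ox Oy) as G.
    rewrite <- Hr, EC, <- Crho in G.
    pose proof (cosh_lt r rho Pr Hlt). clear - G H Hr; lra.
Qed.
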